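(* The greedy algorithm g-HHL is an $O(\sqrt n\log n)$-approximation algorithm for HL: on every input graph with $n$ vertices, the hub labeling it outputs has total size at most $O(\sqrt n\log n)$ times the minimum total size of a hub labeling of that graph.
   Context: Input: a directed graph $G=(V,E)$, $n=|V|$, with nonnegative arc lengths and no zero-length cycles; $\mathrm{dist}(u,w)$ is the shortest-path distance. A hub labeling (HL) assigns to each $v$ a forward label $L_f(v)\subseteq V$ and backward label $L_b(v)\subseteq V$ such that for every ordered pair $(u,w)$ with $w$ reachable from $u$, $L_f(u)\cap L_b(w)$ contains a vertex on some shortest $u$–$w$ path; its size is $\sum_v(|L_f(v)|+|L_b(v)|)$. (For undirected graphs $L_f=L_b=L$, pairs are unordered and the size is $\sum_v|L(v)|$.) g-HHL: start with empty labels; let $U$ be the set of uncovered pairs. For each not-yet-selected vertex $v$, the center graph $G_v$ is the bipartite graph with two copies $X,Y$ of $V$ and an arc $(u,w)$ for each $(u,w)\in U$ such that some shortest $u$–$w$ path contains $v$ (in the undirected case: the graph on $V$ with an edge, possibly a self-loop, $\{u,w\}$ for each uncovered unordered pair with a shortest path through $v$). In each iteration g-HHL selects a not-yet-selected vertex $v$ whose center graph has the maximum number of edges (ties arbitrary) and adds $v$ to $L_f(u)$ for each non-isolated $u\in X$ and to $L_b(w)$ for each non-isolated $w\in Y$ (undirected case: to $L(u)$ for each non-isolated $u$), until all pairs are covered. The output is a hierarchical labeling. *)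

(* Defs.v *)
From HB Require Import structures.
From mathcomp Require Import all_boot all_order all_algebra.
From mathcomp Require Import boolp reals exp.
Set Implicit Arguments. Unset Strict Implicit. Unset Printing Implicit Defensive.
Import Order.TTheory GRing.Theory Num.Theory.
Local Open Scope ring_scope.

Section HubLabeling.
Variables (R : realType) (V : finType) (E : rel V) (len : V -> V -> R).

(* A walk is x :: p with path E x p; it ends at last x p. *)
Definition walk_len (x : V) (p : seq V) : R :=
  \sum_(e <- zip (x :: p) p) len e.1 e.2.

Definition is_walk (u w : V) (p : seq V) : Prop := path E u p /\ last u p = w.

Definition reachable (u w : V) : Prop := exists p, is_walk u w p.

Definition shortest_walk (u w : V) (p : seq V) : Prop :=
  is_walk u w p /\ forall q, is_walk u w q -> walk_len u p <= walk_len u q.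

Definition on_sp (u w v : V) : Prop :=
  exists p, shortest_walk u w p /\ v \in u :: p.

Definition nonneg_lengths : Prop := forall x y, E x y -> 0 <= len x y.
Definition no_zero_cycles : Prop :=
  forall x p, path E x p -> last x p = x -> p != [::] -> 0 < walk_len x p.

(* A labeling: forward and backward labels *)
Definition labeling := ((V -> {set V}) * (V -> {set V}))%type.

Definition covered (L : labeling) (u w : V) : Prop :=
  exists v, v \in L.1 u :&: L.2 w /\ on_sp u w v.

Definition is_HL (L : labeling) : Prop :=
  forall u w, reachable u w -> covered L u w.

Definition HL_size (L : labeling) : nat :=
  \sum_(v : V) (#|L.1 v| + #|L.2 v|).

Definition empty_labeling : labeling := (fun _ => set0, fun _ => set0).

Definition uncovered (L : labeling) (u w : V) : Prop :=
  reachable u w /\ ~ covered L u w.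

Definition all_covered (L : labeling) : Prop := forall u w, ~ uncovered L u w.

(* arcs of the center graph G_v (pairs (u,w) in X x Y) *)
Definition center_edges (L : labeling) (v : V) : {set V * V} :=
  [set p : V * V | `[< uncovered L p.1 p.2 /\ on_sp p.1 p.2 v >] ].

Definition hhl_step (L : labeling) (v : V) : labeling :=
  (fun u => if [exists w, (u, w) \in center_edges L v] then v |: L.1 u else L.1 u,
   fun w => if [exists u, (u, w) \in center_edges L v] then v |: L.2 w else L.2 w).

(* greedy_run L S vs : starting from labels L with already selected set S,
   the sequence vs is a valid sequence of greedy choices of g-HHL, ending
   exactly when all pairs are covered (ties broken arbitrarily). *)
Fixpoint greedy_run (L : labeling) (S : {set V}) (vs : seq V) : Prop :=
  match vs with
  | [::] => all_covered L
  | v :: vs' =>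
      ~ all_covered L /\ v \notin S /\
      (forall v', v' \notin S -> #|center_edges L v'| <= #|center_edges L v|)%N /\
      greedy_run (hhl_step L v) (v |: S) vs'
  end.

Definition greedy_output (vs : seq V) : labeling := foldl hhl_step empty_labeling vs.

End HubLabeling.

(* Main.v *)
Require Import Defs.
From HB Require Import structures.
From mathcomp Require Import all_boot all_order all_algebra.
From mathcomp Require Import boolp reals exp.
From mathcomp Require Import ring lra zify.
Import Order.TTheory GRing.Theory Num.Theory.
Local Open Scope ring_scope.

Lemma term_bound (R : realType) (m a b : nat) :
  2 * ((minn m (a * b))%:R : R) <= Num.sqrt (m%:R : R) * (a + b)%:R.
Proof.
set s := Num.sqrt (m%:R : R).
have s0 : 0 <= s := sqrtr_ge0 _.
have ss : s * s = m%:R by rewrite -expr2 sqr_sqrtr.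
have h1 : ((minn m (a * b))%:R : R) <= m%:R by rewrite ler_nat geq_minl.
have h2 : ((minn m (a * b))%:R : R) <= a%:R * b%:R by rewrite -natrM ler_nat geq_minr.
have a0 : (0 : R) <= a%:R by rewrite ler0n.
have b0 : (0 : R) <= b%:R by rewrite ler0n.
rewrite natrD.
have [hs|hs] := lerP s ((a%:R + b%:R) / 2).
- nra.
- have : a%:R * b%:R <= ((a%:R + b%:R) / 2) ^+ 2 :> R.
    have : 0 <= (a%:R - b%:R) ^+ 2 :> R by rewrite sqr_ge0.
    lra.
  nra.
Qed.

Lemma min_sqrt (R : realType) (n m : nat) :
  ((minn n m)%:R : R) <= Num.sqrt (n%:R : R) * Num.sqrt (m%:R : R).
Proof.
rewrite -sqrtrM ?ler0n // -natrM.
have h : ((minn n m)%:R : R) = Num.sqrt (((minn n m)%:R) ^+ 2) by rewrite sqrtr_sqr ger0_norm ?ler0n.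
rewrite h ler_sqrt ?ler0n // -natrX ler_nat expnS expn1 leq_mul // ?geq_minl ?geq_minr //.
Qed.

Definition Phi (R : realType) (U : nat) : R := if U == 0%N then 0 else ln (U%:R : R) + 1.

Lemma Phi_ge0 (R : realType) U : 0 <= Phi R U.
Proof.
rewrite /Phi; case: eqP => // hU; have : 0 <= ln (U%:R : R).
  by apply: ln_ge0; rewrite ler1n; lia.
lra.
Qed.

Lemma phi_step (R : realType) (m U U' : nat) :
  (1 <= m)%N -> (m <= U)%N -> (U' + m <= U)%N ->
  (m%:R : R) / U%:R <= Phi R U - Phi R U'.
Proof.
move=> m1 mU hU'.
have U0 : (0 : R) < U%:R by rewrite ltr0n; lia.
have mle : (m%:R : R) / U%:R <= 1 by rewrite ler_pdivrMr // mul1r ler_nat.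
rewrite /Phi; have -> : (U == 0)%N = false by apply/eqP; lia.
have lU : 0 <= ln (U%:R : R) by apply: ln_ge0; rewrite ler1n; lia.
case: eqP => hU0; first lra.
have d0 : (0 : R) < (U - m)%:R by rewrite ltr0n; lia.
have h1 : ln (U'%:R : R) <= ln ((U - m)%:R) .
  by rewrite ler_ln ?posrE ?ltr0n ?ler_nat; lia.
have h2 : ln ((U - m)%:R / U%:R : R) <= - ((m%:R : R) / U%:R).
  have e : ((U - m)%:R / U%:R : R) = 1 + - ((m%:R : R) / U%:R).
    rewrite natrB //; field; lra.
  rewrite e; apply: le_ln1Dx.
  have : (m%:R : R) < U%:R by rewrite ltr_nat; lia.
  move=> h; rewrite ltrN2 ltr_pdivrMr // mul1r.
  exact: h.
rewrite ln_div ?posrE // in h2.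
lra.
Qed.
Lemma key (R : realType) (n m U U' c opt : nat) :
  (1 <= U)%N -> (U' + m <= U)%N ->
  2 * (U%:R : R) <= Num.sqrt (m%:R) * opt%:R ->
  (c <= 2 * minn n m)%N ->
  (c%:R : R) <= Num.sqrt (n%:R : R) * opt%:R * (Phi R U - Phi R U').
Proof.
move=> U1 hU h2 hc.
set r := Num.sqrt (n%:R : R); set s := Num.sqrt (m%:R : R).
have r0 : 0 <= r := sqrtr_ge0 _.
have s0 : 0 <= s := sqrtr_ge0 _.
have ss : s * s = m%:R by rewrite -expr2 sqr_sqrtr ?ler0n.
have U0 : (1 : R) <= U%:R by rewrite ler1n.
have o0 : (0 : R) <= opt%:R by rewrite ler0n.
have m1 : (1 <= m)%N.
  rewrite lt0n; apply/eqP => m0.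
  move: h2; rewrite /s m0 sqrtr0 mul0r; lra.
have hq := @phi_step R m U U' m1 (leq_trans (leq_addl _ _) hU) hU.
set q := (m%:R : R) / U%:R in hq.
have qU : q * U%:R = m%:R by rewrite /q mulfVK //; apply/eqP => e; lra.
have hc' : (c%:R : R) <= 2 * (r * s).
  apply: le_trans (_ : (2 * minn n m)%:R <= _); first by rewrite ler_nat.
  rewrite natrM; have := min_sqrt R n m; rewrite -/r -/s; lra.
have A : 2 * (r * s) * U%:R <= r * opt%:R * q * U%:R.
  have e : r * opt%:R * q * U%:R = r * opt%:R * m%:R by rewrite -qU; ring.
  rewrite e -ss; have rs : 0 <= r * s by apply: mulr_ge0.
  rewrite -/s in h2; nra.
have B : 2 * (r * s) <= r * opt%:R * q.
  by rewrite -(ler_pM2r (_ : (0 : R) < U%:R)) //; lra.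
have C : r * opt%:R * q <= r * opt%:R * (Phi R U - Phi R U').
  by apply: ler_wpM2l => //; apply: mulr_ge0.
lra.
Qed.
Section Comb.
Variables (R : realType) (V : finType) (E : rel V) (len : V -> V -> R).

Definition unc (L : labeling V) : {set V * V} :=
  [set p : V * V | `[< uncovered E len L p.1 p.2 >] ].

Lemma step1_sub (L : labeling V) v u : L.1 u \subset (hhl_step E len L v).1 u.
Proof. rewrite /hhl_step /=; case: ifP => _ //; exact: subsetUr. Qed.
Lemma step2_sub (L : labeling V) v u : L.2 u \subset (hhl_step E len L v).2 u.
Proof. rewrite /hhl_step /=; case: ifP => _ //; exact: subsetUr. Qed.

Lemma covered_step (L : labeling V) v u w : covered E len L u w -> covered E len (hhl_step E len L v) u w.
Proof.
case=> x [/setIP [h1 h2] hs]; exists x; split => //.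
by apply/setIP; split; [apply: (subsetP (step1_sub L v u)) | apply: (subsetP (step2_sub L v w))].
Qed.

Lemma center_step (L : labeling V) v x : center_edges E len (hhl_step E len L v) x \subset center_edges E len L x.
Proof.
apply/subsetP => p; rewrite !inE => /asboolP [[hr hc] hs]; apply/asboolP; split => //.
by split => // h; apply: hc; exact: covered_step.
Qed.

Lemma center_covered (L : labeling V) v p : p \in center_edges E len L v ->
  covered E len (hhl_step E len L v) p.1 p.2.
Proof.
move=> hp; have := hp; rewrite inE => /asboolP [_ hs].
exists v; split => //; apply/setIP; split; rewrite /hhl_step /=.
- have -> : [exists w, (p.1, w) \in center_edges E len L v].
    by apply/existsP; exists p.2; rewrite -surjective_pairing.
  exact: setU11.
- have -> : [exists u, (u, p.2) \in center_edges E len L v].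
    by apply/existsP; exists p.1; rewrite -surjective_pairing.
  exact: setU11.
Qed.

Lemma center_unc (L : labeling V) v : center_edges E len L v \subset unc L.
Proof. by apply/subsetP => p; rewrite !inE => /asboolP [h _]; apply/asboolP. Qed.

Lemma unc_step (L : labeling V) v :
  (#|unc (hhl_step E len L v)| + #|center_edges E len L v| <= #|unc L|)%N.
Proof.
have sub : unc (hhl_step E len L v) \subset unc L :\: center_edges E len L v.
  apply/subsetP => p; rewrite !inE => /asboolP [hr hc]; apply/andP; split.
  - by apply/negP => hp; apply: hc; apply: (@center_covered L v p); rewrite inE.
  - by apply/asboolP; split => // h; apply: hc; exact: covered_step.
have := subset_leq_card sub; rewrite cardsD.
have -> : unc L :&: center_edges E len L v = center_edges E len L v.
  by apply/setIidPr; exact: center_unc.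
have := subset_leq_card (center_unc L v); lia.
Qed.

Definition Inv (L : labeling V) (S : {set V}) :=
  forall x, x \in S -> center_edges E len L x = set0.

Lemma Inv_step (L : labeling V) S v : Inv L S -> Inv (hhl_step E len L v) (v |: S).
Proof.
move=> hI x; rewrite !inE => /orP [/eqP -> | xS].
- apply/eqP; rewrite -subset0; apply/subsetP => p hp; exfalso.
  have hp' := subsetP (center_step L v v) p hp.
  move: hp; rewrite inE => /asboolP [[_ hc] _]; apply: hc; exact: (@center_covered L v p hp').
- apply/eqP; rewrite -subset0 -(hI x xS); exact: center_step.
Qed.

Lemma size_step (L : labeling V) v :
  (HL_size (hhl_step E len L v) <= HL_size L + 2 * minn #|V| #|center_edges E len L v|)%N.
Proof.
set C := center_edges E len L v.
set X := [set u | [exists w, (u, w) \in C]].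
set Y := [set w | [exists u, (u, w) \in C]].
have hX : (#|X| <= minn #|V| #|C|)%N.
  rewrite leq_min max_card /=.
  have : X \subset [set p.1 | p in C].
    apply/subsetP => u; rewrite inE => /existsP [w hw]; apply/imsetP; by exists (u, w).
  move/subset_leq_card => h; apply: leq_trans h _; exact: leq_imset_card.
have hY : (#|Y| <= minn #|V| #|C|)%N.
  rewrite leq_min max_card /=.
  have : Y \subset [set p.2 | p in C].
    apply/subsetP => u; rewrite inE => /existsP [w hw]; apply/imsetP; by exists (w, u).
  move/subset_leq_card => h; apply: leq_trans h _; exact: leq_imset_card.
have h1 : (\sum_u #|(hhl_step E len L v).1 u| <= \sum_u #|L.1 u| + #|X|)%N.
  have -> : #|X| = (\sum_u (u \in X : nat))%N.
    by rewrite -sum1_card big_mkcond; apply: eq_bigr => u _; case: (u \in X).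
  rewrite -big_split /=; apply: leq_sum => u _.
  rewrite /hhl_step /= inE; case: ifP => _ /=; last by rewrite addn0.
  by rewrite cardsU1 addnC leq_add2l leq_b1.
have h2 : (\sum_u #|(hhl_step E len L v).2 u| <= \sum_u #|L.2 u| + #|Y|)%N.
  have -> : #|Y| = (\sum_u (u \in Y : nat))%N.
    by rewrite -sum1_card big_mkcond; apply: eq_bigr => u _; case: (u \in Y).
  rewrite -big_split /=; apply: leq_sum => u _.
  rewrite /hhl_step /= inE; case: ifP => _ /=; last by rewrite addn0.
  by rewrite cardsU1 addnC leq_add2l leq_b1.
have eq : forall f g : V -> nat, (\sum_u (f u + g u) = \sum_u f u + \sum_u g u)%N by move=> f g; rewrite big_split.
move: h1 h2; rewrite /HL_size !eq; lia.
Qed.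
Lemma card_sum (T : finType) (A : {set T}) : #|A| = (\sum_x (x \in A : nat))%N.
Proof. by rewrite -sum1_card big_mkcond; apply: eq_bigr => u _; case: (u \in A). Qed.

Definition Aset (Ls : labeling V) v := [set u | v \in Ls.1 u].
Definition Bset (Ls : labeling V) v := [set w | v \in Ls.2 w].

Lemma opt_eq (Ls : labeling V) :
  (\sum_v (#|Aset Ls v| + #|Bset Ls v|))%N = HL_size Ls.
Proof.
have eq : forall f g : V -> nat, (\sum_u (f u + g u) = \sum_u f u + \sum_u g u)%N
  by move=> f g; rewrite big_split.
rewrite /HL_size !eq; congr (_ + _)%N.
- under eq_bigr => v _ do rewrite card_sum.
  rewrite exchange_big /=; apply: eq_bigr => u _; rewrite card_sum.
  by apply: eq_bigr => v _; rewrite inE.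
- under eq_bigr => v _ do rewrite card_sum.
  rewrite exchange_big /=; apply: eq_bigr => u _; rewrite card_sum.
  by apply: eq_bigr => v _; rewrite inE.
Qed.

Lemma unc_bound (Ls L : labeling V) S m :
  is_HL E len Ls -> Inv L S ->
  (forall v', v' \notin S -> #|center_edges E len L v'| <= m)%N ->
  (#|unc L| <= \sum_v minn m (#|Aset Ls v| * #|Bset Ls v|))%N.
Proof.
move=> HL hI hm.
set D := fun v => center_edges E len L v :&: setX (Aset Ls v) (Bset Ls v).
have h1 : (#|unc L| <= \sum_p \sum_v (p \in D v : nat))%N.
  rewrite card_sum; apply: leq_sum => p _.
  case hp: (p \in unc L) => //.
  move: hp; rewrite inE => /asboolP [hr hc].
  have [x [hx hs]] := HL _ _ hr.
  rewrite (bigD1 x) //=.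
  have -> : p \in D x.
    move: hx; rewrite inE => /andP [hx1 hx2].
    apply/setIP; split; first by rewrite inE; apply/asboolP.
    by rewrite !inE hx1 hx2.
  by [].
rewrite exchange_big /= in h1; apply: leq_trans h1 _; apply: leq_sum => v _.
rewrite -card_sum leq_min; apply/andP; split.
- apply: leq_trans (subset_leq_card (subsetIl _ _)) _.
  case vS: (v \in S); first by rewrite (hI v vS) cards0.
  by apply: hm; rewrite vS.
- by rewrite -cardsX; apply: subset_leq_card; exact: subsetIr.
Qed.

Lemma sum_real (m : nat) (a b : V -> nat) :
  2 * ((\sum_v minn m (a v * b v))%N%:R : R) <=
  Num.sqrt (m%:R : R) * ((\sum_v (a v + b v))%N%:R).
Proof.
rewrite !natr_sum !mulr_sumr; apply: ler_sum => v _.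
exact: term_bound.
Qed.

Lemma main_ind (Ls : labeling V) : is_HL E len Ls -> forall vs L S,
  greedy_run E len L S vs -> Inv L S ->
  ((HL_size (foldl (hhl_step E len) L vs))%:R : R) <=
    (HL_size L)%:R + Num.sqrt (#|V|%:R : R) * (HL_size Ls)%:R * Phi R #|unc L|.
Proof.
move=> HL; elim=> [|v vs IH] L S /=.
- move=> _ _; rewrite lerDl; apply: mulr_ge0; last exact: Phi_ge0.
  by apply: mulr_ge0; [exact: sqrtr_ge0 | rewrite ler0n].
- move=> [nac [vS [hmax run]]] hI.
  have hI' := @Inv_step L S v hI.
  have IH' := IH _ _ run hI'.
  set L' := hhl_step E len L v in IH'.
  have U1 : (1 <= #|unc L|)%N.
    case: (pselect (exists p : V * V, uncovered E len L p.1 p.2)) => [[p hp]|hn].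
    + by rewrite card_gt0; apply/set0Pn; exists p; rewrite inE; apply/asboolP.
    + exfalso; apply: nac => u w hu; apply: hn; by exists (u, w).
  have hb := @unc_bound Ls L S _ HL hI hmax.
  have h2 : 2 * ((#|unc L|)%:R : R) <=
      Num.sqrt ((#|center_edges E len L v|)%:R) * (HL_size Ls)%:R.
    rewrite -opt_eq; apply: le_trans (sum_real _ _ _).
    by rewrite ler_pM2l // ler_nat.
  have hs := @size_step L v.
  have hu := @unc_step L v.
  have hk := @key R #|V| #|center_edges E len L v| #|unc L| #|unc L'|
     (HL_size L' - HL_size L) (HL_size Ls) U1 hu h2 ltac:(rewrite /L'; lia).
  have e : ((HL_size L')%:R : R) <= (HL_size L)%:R + (HL_size L' - HL_size L)%:R.
    by rewrite -natrD ler_nat; lia.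
  lra.
Qed.
End Comb.

Lemma ln2_ge (R : realType) : 1/2 <= ln (2:R).
Proof.
have h := @le_ln1Dx R (-(1/2)).
have e : 1 + -(1/2) = (2:R)^-1 by field.
rewrite e lnV ?posrE // in h.
have : -(1/2) < (1:R) by lra.
lra.
Qed.

Lemma lnn_ge1 (R : realType) (n : nat) : (4 <= n)%N -> 1 <= ln (n%:R : R).
Proof.
move=> hn; have h4 : ln (4 : R) <= ln (n%:R).
  rewrite ler_ln ?posrE ?ltr0n; [|lia|lia].
  by rewrite ler_nat.
have : ln (4 : R) = ln 2 + ln 2 by rewrite -lnM ?posrE //; congr ln; ring.
have := ln2_ge R; lra.
Qed.

Theorem mainTheorem3 :
  exists C n0 : nat,
    forall (R : realType) (V : finType) (E : rel V) (len : V -> V -> R),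
      (n0 <= #|V|)%N ->
      nonneg_lengths E len -> no_zero_cycles E len ->
      forall vs : seq V,
        greedy_run E len (empty_labeling V) set0 vs ->
        forall L : labeling V, is_HL E len L ->
          ((HL_size (greedy_output E len vs))%:R : R)
            <= (C%:R : R) * Num.sqrt (#|V|%:R : R) * ln (#|V|%:R : R) * (HL_size L)%:R.
Proof.
exists 3%N, 4%N => R V E len hn _ _ vs run L HL.
have hI : @Inv R V E len (empty_labeling V) set0 by move=> x; rewrite inE.
have h := @main_ind R V E len L HL vs _ _ run hI.
have e0 : HL_size (empty_labeling V) = 0%N.
  by rewrite /HL_size big1 // => v _; rewrite /= cards0.
rewrite e0 add0r in h.
set U := #|@unc R V E len (empty_labeling V)| in h.
have ln1 := @lnn_ge1 R _ hn.
have hP : Phi R U <= 3 * ln (#|V|%:R : R).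
  rewrite /Phi; case: eqP => hU; first lra.
  have hUn : (U <= #|V| * #|V|)%N by rewrite -card_prod max_card.
  have : ln (U%:R : R) <= ln (#|V|%:R * #|V|%:R).
    rewrite ler_ln ?posrE ?ltr0n; [|lia|]; last by rewrite -natrM ltr0n; lia.
    by rewrite -natrM ler_nat.
  rewrite lnM ?posrE ?ltr0n; [|lia|lia].
  lra.
have s0 : 0 <= Num.sqrt (#|V|%:R : R) * (HL_size L)%:R.
  by apply: mulr_ge0; [exact: sqrtr_ge0 | rewrite ler0n].
rewrite /greedy_output.
apply: le_trans h _.
have -> : (3%:R : R) * Num.sqrt #|V|%:R * ln #|V|%:R * (HL_size L)%:R
  = Num.sqrt (#|V|%:R : R) * (HL_size L)%:R * (3 * ln #|V|%:R) by ring.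
by apply: ler_wpM2l.
Qed.
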